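(* Let $R$ be a ring and $0\to N'\to N\to P_n\to\cdots\to P_0\to M\to 0$ an exact sequence of $R$-modules in which each $P_i$ is projective and $N'$ and $N$ each have a projective resolution that is eventually finitely generated. Then the partial projective resolution $P_n\to\cdots\to P_0\to M\to 0$ of $M$ can be extended to a projective resolution of $M$ that is eventually finitely generated.
   Context: A resolution $(Q_j)_{j\ge0}$ is eventually finitely generated if $Q_j$ is finitely generated for all sufficiently large $j$. *)

(* Defs.v *)
From HB Require Import structures.
From mathcomp Require Import all_boot all_order all_algebra.
Set Implicit Arguments. Unset Strict Implicit. Unset Printing Implicit Defensive.
Import GRing.Theory.
Local Open Scope ring_scope.

Section ModuleDefs.
Variable R : nzRingType.

Definition exact_at (A B C : lmodType R) (f : {linear A -> B})
  (g : {linear B -> C}) : Prop :=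
  forall y : B, g y = 0 <-> exists x : A, f x = y.

Definition lin_injective (A B : lmodType R) (f : {linear A -> B}) : Prop :=
  forall x y : A, f x = f y -> x = y.

Definition lin_surjective (A B : lmodType R) (f : {linear A -> B}) : Prop :=
  forall y : B, exists x : A, f x = y.

Definition projective (P : lmodType R) : Prop :=
  forall (A B : lmodType R) (g : {linear A -> B}) (f : {linear P -> B}),
    lin_surjective g ->
    exists h : {linear P -> A}, forall x, g (h x) = f x.

Definition fin_gen (A : lmodType R) : Prop :=
  exists (n : nat) (v : 'I_n -> A),
    forall x : A, exists c : 'I_n -> R, x = \sum_(i < n) c i *: v i.

Definition eventually_fg (Q : nat -> lmodType R) : Prop :=
  exists m : nat, forall j, (m <= j)%N -> fin_gen (Q j).

Definition has_efg_proj_resolution (M : lmodType R) : Prop :=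
  exists (Q : nat -> lmodType R) (d : forall j, {linear Q j.+1 -> Q j})
         (e : {linear Q 0%N -> M}),
    [/\ forall j, projective (Q j),
        lin_surjective e,
        exact_at (d 0%N) e,
        (forall j, exact_at (d j.+1) (d j))
      & eventually_fg Q].

End ModuleDefs.

(* Main.v *)
Require Import Defs.
From HB Require Import structures.
From mathcomp Require Import all_boot all_order all_algebra.
Import GRing.Theory.
Local Open Scope ring_scope.

Section Ker.
Variable R : nzRingType.
Variables (B C : lmodType R) (u : {linear B -> C}).
Definition kerp (x : B) : bool := u x == 0.
Lemma kerp_closed : GRing.subsemimod_closed kerp.
Proof.
split; [split|].
- by rewrite /kerp unfold_in /= linear0.
- by move=> x y; rewrite /kerp !unfold_in /= linearD => /eqP-> /eqP->; rewrite addr0.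
- by move=> a x; rewrite /kerp !unfold_in /= linearZZ => /eqP->; rewrite scaler0.
Qed.
HB.instance Definition _ := GRing.isSubmodClosed.Build R B kerp kerp_closed.
Record kerT := KerT { kval :> B; _ : kerp kval }.
HB.instance Definition _ := [isSub for kval].
HB.instance Definition _ := [Choice of kerT by <:].
HB.instance Definition _ := [SubChoice_isSubLmodule of kerT by <:].

Variables (A : lmodType R) (g : {linear A -> B}).
Hypothesis Hg : forall x, u (g x) = 0.
Definition gK (x : A) : kerT := @KerT (g x) (introT eqP (Hg x)).
Lemma gK_lin : linear gK.
Proof. by move=> a x y; apply: val_inj; rewrite /= linearP. Qed.
HB.instance Definition _ := GRing.isLinear.Build R A kerT *:%R gK gK_lin.
End Ker.

Lemma proj_lift (R : nzRingType) (P A B C : lmodType R)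
  (g : {linear A -> B}) (u : {linear B -> C}) (f : {linear P -> B}) :
  projective P -> exact_at g u -> (forall p, u (f p) = 0) ->
  exists h : {linear P -> A}, forall p, g (h p) = f p.
Proof.
move=> PP Hgu Hf.
have Hg : forall x, u (g x) = 0 by move=> x; apply/Hgu; exists x.
have surj : lin_surjective (@gK R B C u A g Hg).
  move=> [y Hy]; have /Hgu [x Hx] := eqP Hy.
  by exists x; apply: val_inj.
have [h Hh] := PP _ _ (@gK R B C u A g Hg) (@gK R B C u P f Hf) surj.
by exists h => p; have := congr1 val (Hh p).
Qed.
Section Maps.
Variable R : nzRingType.
Variables (U V W W2 : lmodType R).
Definition linl (x : U) : (U * V)%type := (x, 0).
Definition linr (x : V) : (U * V)%type := (0, x).
Lemma linl_lin : linear linl.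
Proof. move=> a x y; rewrite /linl; apply: injective_projections => /=; rewrite ?scaler0 ?addr0 //. Qed.
Lemma linr_lin : linear linr.
Proof. move=> a x y; rewrite /linr; apply: injective_projections => /=; rewrite ?scaler0 ?addr0 //. Qed.
HB.instance Definition _ := GRing.isLinear.Build R U (U * V)%type *:%R linl linl_lin.
HB.instance Definition _ := GRing.isLinear.Build R V (U * V)%type *:%R linr linr_lin.

Variables (p : {linear U -> W}) (q : {linear V -> W}).
Definition copair (z : (U * V)%type) : W := p z.1 + q z.2.
Lemma copair_lin : linear copair.
Proof.
move=> a [x y] [x' y']; rewrite /copair /= !linearP scalerDr.
by rewrite -!addrA; congr (_ + _); rewrite addrCA.
Qed.
HB.instance Definition _ := GRing.isLinear.Build R (U * V)%type W *:%R copair copair_lin.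

Variables (p2 : {linear U -> W2}) (q2 : {linear V -> W2}) (r : {linear V -> V}).
End Maps.

Section Cone.
Variable R : nzRingType.
Variables (A1 A0 B1 B0 : lmodType R) (aa : {linear A1 -> A0}) (ph : {linear B1 -> A0})
  (bb : {linear B1 -> B0}).
Definition conemap (z : (A1 * B1)%type) : (A0 * B0)%type := (aa z.1 + ph z.2, - bb z.2).
Lemma conemap_lin : linear conemap.
Proof.
move=> a [x y] [x' y']; rewrite /conemap; apply: injective_projections => /=.
  rewrite !linearP scalerDr -!addrA; congr (_ + _); by rewrite addrCA.
by rewrite linearP opprD scalerN.
Qed.
HB.instance Definition _ := GRing.isLinear.Build R (A1 * B1)%type (A0 * B0)%type *:%R conemap conemap_lin.
End Cone.

Lemma proj_prod (R : nzRingType) (P1 P2 : lmodType R) :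
  projective P1 -> projective P2 -> projective (P1 * P2)%type.
Proof.
move=> H1 H2 A B g f Hs.
have [h1 Hh1] := H1 A B g (f \o @linl R P1 P2) Hs.
have [h2 Hh2] := H2 A B g (f \o @linr R P1 P2) Hs.
exists (@copair R P1 P2 A h1 h2) => [[x y]].
rewrite /copair /= linearD Hh1 Hh2 /= /linl /linr -linearD /=.
congr (f _); apply: injective_projections => /=; by rewrite ?addr0 ?add0r.
Qed.

Lemma fg_prod (R : nzRingType) (P1 P2 : lmodType R) :
  fin_gen P1 -> fin_gen P2 -> fin_gen (P1 * P2)%type.
Proof.
move=> [n1 [v1 H1]] [n2 [v2 H2]].
exists (n1 + n2)%N, (fun i => match split i with inl k => (v1 k, 0) | inr k => (0, v2 k) end).
move=> [x y]; have [c1 ->] := H1 x; have [c2 ->] := H2 y.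
exists (fun i => match split i with inl k => c1 k | inr k => c2 k end).
rewrite big_split_ord /=.
rewrite (eq_bigr (fun k => (c1 k *: v1 k, 0))); last first.
  by move=> k _; rewrite (unsplitK (inl _ : 'I_n1 + 'I_n2)) /=; apply: injective_projections => /=; rewrite ?scaler0.
rewrite [X in _ = _ + X](eq_bigr (fun k => (0, c2 k *: v2 k))); last first.
  by move=> k _; rewrite (unsplitK (inr _ : 'I_n1 + 'I_n2)) /=; apply: injective_projections => /=; rewrite ?scaler0.
have Hf : forall (m : nat) (F : 'I_m -> (P1 * P2)%type), (\sum_(k < m) F k).1 = \sum_(k < m) (F k).1.
  by move=> m F; apply: (big_morph fst) => //.
have Hs : forall (m : nat) (F : 'I_m -> (P1 * P2)%type), (\sum_(k < m) F k).2 = \sum_(k < m) (F k).2.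
  by move=> m F; apply: (big_morph snd) => //.
apply: injective_projections => /=.
  by rewrite !Hf /= big1_eq addr0.
by rewrite !Hs /= big1_eq add0r.
Qed.

From Stdlib Require Import ClassicalEpsilon Lia.
From mathcomp Require Import zify.

Lemma exact0 (R : nzRingType) (A B C : lmodType R) (g : {linear A -> B}) (u : {linear B -> C}) :
  exact_at g u -> forall x, u (g x) = 0.
Proof. by move=> H x; apply/H; exists x. Qed.
Arguments exact0 {R A B C g u}.

Section Chain.
Variable R : nzRingType.
Variables (A B : nat -> lmodType R) (a : forall j, {linear A j.+1 -> A j})
  (b : forall j, {linear B j.+1 -> B j}) (N N' : lmodType R)
  (ea : {linear A 0%N -> N}) (eb : {linear B 0%N -> N'}) (i : {linear N' -> N}).
Hypotheses (PB : forall j, projective (B j)) (Sea : lin_surjective ea)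
  (Ea0 : exact_at (a 0%N) ea) (Ea : forall j, exact_at (a j.+1) (a j))
  (Eb0 : exact_at (b 0%N) eb) (Eb : forall j, exact_at (b j.+1) (b j)).

Definition Inv (j : nat) : {linear B j -> A j} -> Prop :=
  match j return {linear B j -> A j} -> Prop with
  | 0%N => fun psi => forall y, ea (psi (b 0%N y)) = 0
  | k.+1 => fun psi => forall y, a k (psi (b k.+1 y)) = 0
  end.

Lemma step j (psi : {linear B j -> A j}) : Inv j psi ->
  exists psi' : {linear B j.+1 -> A j.+1}, Inv j.+1 psi' /\ forall y, a j (psi' y) = psi (b j y).
Proof.
case: j psi => [|k] psi /= Hpsi.
  have [h Hh] := @proj_lift _ _ _ _ _ _ _ (psi \o b 0%N) (PB 1) Ea0 Hpsi.
  by exists h; split => // y; rewrite Hh /= (exact0 (Eb 0%N)) linear0.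
have [h Hh] := @proj_lift _ _ _ _ _ _ _ (psi \o b k.+1) (PB k.+2) (Ea k) Hpsi.
by exists h; split => // y; rewrite Hh /= (exact0 (Eb k.+1)) linear0.
Qed.

Lemma phi0_ex : exists psi : {linear B 0%N -> A 0%N}, Inv 0 psi /\ forall y, ea (psi y) = i (eb y).
Proof.
have [h Hh] := PB 0%N _ _ ea (i \o eb) Sea.
by exists h; split => // y; rewrite /= Hh /= (exact0 Eb0) linear0.
Qed.

Definition phi0 := proj1_sig (constructive_indefinite_description _ phi0_ex).
Lemma phi0_inv : Inv 0 phi0.
Proof. exact: (proj1 (proj2_sig (constructive_indefinite_description _ phi0_ex))). Qed.
Lemma phi0_rel y : ea (phi0 y) = i (eb y).
Proof. exact: (proj2 (proj2_sig (constructive_indefinite_description _ phi0_ex))). Qed.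

Definition stepS j (p : {psi : {linear B j -> A j} | Inv j psi}) :=
  constructive_indefinite_description _ (@step j (proj1_sig p) (proj2_sig p)).

Fixpoint phis (j : nat) : {psi : {linear B j -> A j} | Inv j psi} :=
  match j return {psi : {linear B j -> A j} | Inv j psi} with
  | 0%N => exist _ phi0 phi0_inv
  | k.+1 => exist _ (proj1_sig (@stepS k (phis k))) (proj1 (proj2_sig (@stepS k (phis k))))
  end.

Definition phi j : {linear B j -> A j} := proj1_sig (phis j).

Lemma phi_rel j y : a j (phi j.+1 y) = phi j (b j y).
Proof. exact: (proj2 (proj2_sig (@stepS j (phis j))) y). Qed.
Lemma phi_rel0 y : ea (phi 0 y) = i (eb y).
Proof. exact: phi0_rel. Qed.
End Chain.
Theorem mainTheorem9 (R : nzRingType) (n : nat)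
  (X : nat -> lmodType R) (f : forall k, {linear X k.+1 -> X k}) :
  (forall i, (i <= n)%N -> projective (X i.+1)) ->
  lin_surjective (f 0%N) ->
  (forall k, (k <= n.+1)%N -> exact_at (f k.+1) (f k)) ->
  lin_injective (f n.+2) ->
  has_efg_proj_resolution (X n.+3) ->
  has_efg_proj_resolution (X n.+2) ->
  exists (Q : nat -> lmodType R) (d : forall j, {linear Q j.+1 -> Q j})
         (e : {linear Q 0%N -> X n.+1}),
    [/\ forall j, projective (Q j),
        exact_at e (f n),
        exact_at (d 0%N) e,
        (forall j, exact_at (d j.+1) (d j))
      & eventually_fg Q].
Proof.
move=> PX Sf0 Ex Inj [B [b [eb [PB Seb Eb0 Eb FB]]]] [A [a [ea [PA Sea Ea0 Ea FA]]]].
pose ph := @phi R A B a b _ _ ea eb (f n.+2) PB Sea Ea0 Ea Eb0 Eb.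
have Hrel : forall j y, a j (ph j.+1 y) = ph j (b j y) by move=> j y; exact: phi_rel.
have Hrel0 : forall y, ea (ph 0%N y) = f n.+2 (eb y) by move=> y; exact: phi_rel0.
clearbody ph.
pose C := fun j => match j return lmodType R with 0%N => A 0%N | k.+1 => (A k.+1 * B k)%type end.
pose d := fun j => match j return {linear C j.+1 -> C j} with
  | 0%N => @copair R (A 1%N) (B 0%N) (A 0%N) (a 0%N) (ph 0%N)
  | k.+1 => @conemap R _ _ _ _ (a k.+1) (ph k.+1) (b k) end.
exists C, d, (f n.+1 \o ea).
have Exn : exact_at (f n.+1) (f n) by apply: Ex.
have Exn1 : exact_at (f n.+2) (f n.+1) by apply: Ex.
split.
- by case=> [|k] /=; [apply: PA | apply: proj_prod].
- move=> y; split.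
    by move/Exn => [z <-]; have [c <-] := Sea z; exists c.
  by move=> [c <-]; apply/Exn; exists (ea c).
- move=> c /=; split.
    move=> /Exn1 [w Hw]; have [v Hv] := Seb w.
    have : ea (c - ph 0%N v) = 0 by rewrite linearB Hrel0 Hv Hw subrr.
    move=> /Ea0 [x Hx]; exists (x, v); rewrite /copair /= Hx.
    by rewrite subrK.
  move=> [[x y] <-]; rewrite /copair /= linearD (exact0 Ea0) add0r Hrel0.
  exact: (exact0 Exn1).
- case=> [|k] z /=.
  + case: z => x y; rewrite /copair /=; split.
      move=> H.
      have Hy : f n.+2 (eb y) = f n.+2 0.
        by rewrite linear0 -Hrel0 -[ph 0%N y](addKr (a 0%N x)) H addr0 linearN (exact0 Ea0) oppr0.
      have /Eb0 [y' Hy'] := Inj _ _ Hy.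
      have : a 0%N (x + ph 1%N y') = 0 by rewrite linearD Hrel Hy'.
      move=> /(Ea 0%N) [x' Hx']; exists (x', - y'); rewrite /conemap /=.
      apply: injective_projections => /=; last by rewrite linearN opprK.
      by rewrite linearN Hx' addrK.
    move=> [[x' y'] [<- <-]]; rewrite linearD (exact0 (Ea 0%N)) add0r.
    by rewrite linearN Hrel subrr.
  + case: z => x y; rewrite /conemap /=; split.
      move=> H.
      have Hx0 := congr1 fst H; have Hy0 := congr1 snd H; simpl in Hx0, Hy0.
      have : b k y = 0 by rewrite -[b k y]opprK Hy0 oppr0.
      move=> /(Eb k) [y' Hy'].
      have : a k.+1 (x + ph k.+2 y') = 0 by rewrite linearD Hrel Hy'.
      move=> /(Ea k.+1) [x' Hx']; exists (x', - y'); rewrite /conemap /=.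
      apply: injective_projections => /=; last by rewrite linearN opprK.
      by rewrite linearN Hx' addrK.
    move=> [[x' y'] [<- <-]].
    apply: injective_projections => /=.
      by rewrite linearD (exact0 (Ea k.+1)) add0r linearN Hrel subrr.
    by rewrite linearN opprK (exact0 (Eb k)).
- have [m1 H1] := FA; have [m2 H2] := FB.
  exists (m1 + m2).+1 => [[|k]] //= Hk; apply: fg_prod; [apply: H1 | apply: H2]; lia.
Qed.
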